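(* For any weighted graph $G$, any $\alpha\geq 1$, $\beta\geq 0$ and any initial subgraph $H_0\subseteq G$, the $(\alpha,\beta)$-completion algorithm terminates.
   Context: $G=(V,E,w)$ is an undirected graph with positive edge weights, in which every edge is a shortest path between its endpoints; $\mathrm{dist}_X$ is the weighted shortest-path distance in a graph $X$ and $W_{\max}(G)$ the maximum edge weight. For a shortest path $P_{x,y}=(x_0,\ldots,x_t)$ in $G$ and $H\subseteq G$, an $\alpha$-segmentation is a sequence of index intervals $([i_0,i_1],\ldots,[i_{s-1},i_s])$ with $0=i_0<\cdots<i_s=t$ such that every segment with $i_j-i_{j-1}\geq2$ satisfies $\mathrm{dist}_H(x_{i_{j-1}},x_{i_j})\leq\alpha\,\mathrm{dist}_G(x_{i_{j-1}},x_{i_j})$; it is minimal if no consecutive sequence of segments can be merged to give another $\alpha$-segmentation. $E_\alpha(\mathcal{S},H)$ is the set of edges $e=\{u,v\}$ forming length-one segments of $\mathcal{S}$ with $\mathrm{dist}_H(u,v)>\alpha w(e)$. The $(\alpha,\beta)$-completion algorithm: set $H\gets H_0$; while some pair $x,y$ has $\mathrm{dist}_H(x,y)>\alpha\,\mathrm{dist}_G(x,y)+\beta W_{\max}(G)$, pick such a pair, a shortest $x$–$y$ path $P_{x,y}$ in $G$, a minimal $\alpha$-segmentation $\mathcal{S}$ of it w.r.t. the current $H$, and set $H\gets H\cup E_\alpha(\mathcal{S},H)$. *)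

(* Defs.v *)
From HB Require Import structures.
From mathcomp Require Import all_boot all_order all_algebra.
From mathcomp Require Import boolp classical_sets reals constructive_ereal ereal.
Set Implicit Arguments. Unset Strict Implicit. Unset Printing Implicit Defensive.
Import Order.TTheory GRing.Theory Num.Theory.
Local Open Scope classical_set_scope.
Local Open Scope ring_scope.

Section Completion.
Variables (R : realType) (V : finType).

(* Undirected graphs on the vertex set V are represented by symmetric edge
   sets F : {set V * V} (both orientations of each edge are present); the
   weight function w is shared by G and all its subgraphs. *)

Definition walk_w (w : V -> V -> R) (x : V) (p : seq V) : R :=
  \sum_(ab <- zip (x :: p) p) w ab.1 ab.2.

Definition walks (F : {set V * V}) (x y : V) : set (seq V) :=
  [set p | path (fun a b => (a, b) \in F) x p /\ last x p = y].

(* weighted shortest-path distance (+oo if y is unreachable) *)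
Definition dist (w : V -> V -> R) (F : {set V * V}) (x y : V) : \bar R :=
  ereal_inf [set (walk_w w x p)%:E | p in walks F x y].

(* maximum edge weight of G (0 if G has no edge) *)
Definition Wmax (w : V -> V -> R) (E : {set V * V}) : R :=
  \big[Num.max/0]_(e in E) w e.1 e.2.

(* P = x :: p (i.e. x_0 = x, ..., x_t = last x p, t = size p) is a shortest
   x--y path in G *)
Definition shortest_path (w : V -> V -> R) (E : {set V * V}) (x y : V)
    (p : seq V) : Prop :=
  p \in walks E x y /\ (walk_w w x p)%:E = dist w E x y.

Definition pv (x : V) (p : seq V) (i : nat) : V := nth x (x :: p) i.

Definition segs (I : seq nat) : seq (nat * nat) := zip I (behead I).

Definition is_segmentation (w : V -> V -> R) (E H : {set V * V}) (alpha : R)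
    (x : V) (p : seq V) (I : seq nat) : Prop :=
  [/\ (2 <= size I)%N, head 1%N I = 0%N, last 0%N I = size p,
      sorted ltn I &
      forall ab, ab \in segs I -> (2 <= ab.2 - ab.1)%N ->
        (dist w H (pv x p ab.1) (pv x p ab.2) <=
         alpha%:E * dist w E (pv x p ab.1) (pv x p ab.2))%E].

(* minimal: merging segments j = p..q+1 (i.e. deleting the interior indices
   i_p, ..., i_q, for 1 <= p <= q <= s-1) never yields an alpha-segmentation *)
Definition is_minimal_segmentation (w : V -> V -> R) (E H : {set V * V})
    (alpha : R) (x : V) (p : seq V) (I : seq nat) : Prop :=
  is_segmentation w E H alpha x p I /\
  forall a b : nat, (0 < a)%N -> (a <= b)%N -> (b.+1 < size I)%N ->
    ~ is_segmentation w E H alpha x p (take a I ++ drop b.+1 I).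

(* E_alpha(S, H): edges forming length-one segments with dist_H > alpha w(e),
   both orientations *)
Definition Ealpha (w : V -> V -> R) (H : {set V * V}) (alpha : R)
    (x : V) (p : seq V) (I : seq nat) : {set V * V} :=
  [set e | has (fun ab : nat * nat =>
      [&& ab.2 == ab.1.+1 :> nat,
          (e == (pv x p ab.1, pv x p ab.2)) || (e == (pv x p ab.2, pv x p ab.1)) &
          ((alpha * w (pv x p ab.1) (pv x p ab.2))%:E
             < dist w H (pv x p ab.1) (pv x p ab.2))%E]) (segs I)].

(* one iteration of the while loop of the (alpha,beta)-completion algorithm *)
Definition completion_step (w : V -> V -> R) (E : {set V * V})
    (alpha beta : R) (H H' : {set V * V}) : Prop :=
  exists (x y : V) (p : seq V) (I : seq nat),
    [/\ (alpha%:E * dist w E x y + (beta * Wmax w E)%:E < dist w H x y)%E,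
        shortest_path w E x y p,
        is_minimal_segmentation w E H alpha x p I &
        H' = H :|: Ealpha w H alpha x p I].

End Completion.

(* Main.v *)
Require Import Defs.
From HB Require Import structures.
From mathcomp Require Import all_boot all_order all_algebra.
From mathcomp Require Import boolp classical_sets reals constructive_ereal ereal.
From mathcomp Require Import zify ring lra.
Import Order.TTheory GRing.Theory Num.Theory.
Local Open Scope ring_scope.
Set Implicit Arguments. Unset Strict Implicit.

Section Aux.
Variables (R : realType) (V : finType) (w : V -> V -> R).

Lemma walk_w_cons x y p : walk_w w x (y :: p) = w x y + walk_w w y p.
Proof. by rewrite /walk_w /= big_cons. Qed.

Lemma walk_w_cat x p1 p2 :
  walk_w w x (p1 ++ p2) = walk_w w x p1 + walk_w w (last x p1) p2.
Proof.
elim: p1 x => [|y p1 IH] x /=; first by rewrite /walk_w big_nil add0r.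
by rewrite !walk_w_cons IH addrA.
Qed.

Lemma walk_seg (F : {set V * V}) (f : nat -> V) n a :
  (forall j, (a <= j)%N -> (j < (a + n)%N)%N -> (f j, f j.+1) \in F) ->
  [/\ path (fun u v => (u, v) \in F) (f a) [seq f j | j <- iota a.+1 n],
      last (f a) [seq f j | j <- iota a.+1 n] = f (a + n)%N &
      walk_w w (f a) [seq f j | j <- iota a.+1 n] =
        \sum_(a <= j < (a + n)%N) w (f j) (f j.+1)].
Proof.
elim: n a => [|n IH] a hF.
  by rewrite /= addn0 big_geq // /walk_w /= big_nil; split.
have [h1 h2 h3] : [/\ path (fun u v => (u, v) \in F) (f a.+1) [seq f j | j <- iota a.+2 n],
      last (f a.+1) [seq f j | j <- iota a.+2 n] = f (a.+1 + n)%N &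
      walk_w w (f a.+1) [seq f j | j <- iota a.+2 n] =
        \sum_(a.+1 <= j < (a.+1 + n)%N) w (f j) (f j.+1)].
  by apply: IH => j ha hb; apply: hF; [exact: ltnW | rewrite addnS -addSn].
rewrite /= h1 andbT walk_w_cons h3 h2 addSnnS; split => //.
  by apply: hF; rewrite ?leqnn ?addnS ?ltnS ?leq_addr.
by rewrite (@big_ltn _ _ _ a) // addnS ltnS leq_addr.
Qed.

Lemma dist_walk_le (F : {set V * V}) (f : nat -> V) n a :
  (forall j, (a <= j)%N -> (j < (a + n)%N)%N -> (f j, f j.+1) \in F) ->
  (dist w F (f a) (f (a + n)%N) <= (\sum_(a <= j < (a + n)%N) w (f j) (f j.+1))%:E)%E.
Proof.
move=> hF; have [h1 h2 h3] := walk_seg hF.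
apply: ge_ereal_inf; eexists; last exact: lexx.
by exists [seq f j | j <- iota a.+1 n] => //; rewrite h3.
Qed.

Lemma dist_tri F x y z r1 r2 :
  (dist w F x y <= r1%:E)%E -> (dist w F y z <= r2%:E)%E ->
  (dist w F x z <= (r1 + r2)%:E)%E.
Proof.
move=> h1 h2; apply/lee_addgt0Pr => e e0.
have e2 : 0 < e / 2 by rewrite divr_gt0.
have /ereal_inf_lt [_ [p1 [hp1 hl1] <-] lt1] : (dist w F x y < (r1 + e / 2)%:E)%E.
  by apply: (le_lt_trans h1); rewrite lte_fin ltrDl.
have /ereal_inf_lt [_ [p2 [hp2 hl2] <-] lt2] : (dist w F y z < (r2 + e / 2)%:E)%E.
  by apply: (le_lt_trans h2); rewrite lte_fin ltrDl.
apply: ge_ereal_inf; exists (walk_w w x (p1 ++ p2))%:E.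
  exists (p1 ++ p2) => //; split; first by rewrite cat_path hp1 hl1.
  by rewrite last_cat hl1.
rewrite -EFinD lee_fin walk_w_cat hl1.
rewrite lte_fin in lt1; rewrite lte_fin in lt2.
have -> : r1 + r2 + e = (r1 + e / 2) + (r2 + e / 2).
  by rewrite addrACA -splitr.
by apply: ltW; apply: ltrD.
Qed.


Lemma path_last_ge i I : path ltn i I -> (i <= last i I)%N.
Proof.
elim: I i => //= j I IH i /andP[hij hp]; exact: leq_trans (ltnW hij) (IH _ hp).
Qed.

Lemma segs_prop i0 I ab : path ltn i0 I -> ab \in segs (i0 :: I) ->
  (ab.1 < ab.2)%N /\ (ab.2 <= last i0 I)%N.
Proof.
elim: I i0 => [|i1 I IH] i0 //= /andP[h01 hp].
rewrite /segs /= in_cons => /orP[/eqP->|hin]; first by split => //; exact: path_last_ge.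
exact: IH.
Qed.

Lemma pv_last (x : V) p : pv x p (size p) = last x p.
Proof. by rewrite /pv -[size p]/((size (x :: p)).-1) nth_last. Qed.

Lemma walk_w_pv x p : walk_w w x p = \sum_(0 <= j < size p) w (pv x p j) (pv x p j.+1).
Proof.
have hm : [seq pv x p j | j <- iota 1 (size p)] = p.
  rewrite -[1%N]/(1 + 0)%N iotaDl -map_comp -[RHS](mkseq_nth x) /mkseq.
  by apply: eq_map => j /=; rewrite add1n.
have [_ _ h3] := @walk_seg [set: V * V] (pv x p) (size p) 0 (fun j _ _ => finset.in_setT _).
by rewrite hm add0n in h3.
Qed.

Lemma chain H alpha x p i0 I : path ltn i0 I ->
 (forall ab, ab \in segs (i0 :: I) -> (dist w H (pv x p ab.1) (pv x p ab.2) <=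
     (alpha * \sum_(ab.1 <= j < ab.2) w (pv x p j) (pv x p j.+1))%:E)%E) ->
 (dist w H (pv x p i0) (pv x p (last i0 I)) <=
     (alpha * \sum_(i0 <= j < last i0 I) w (pv x p j) (pv x p j.+1))%:E)%E.
Proof.
elim: I i0 => [|i1 I IH] i0 /=.
  move=> _ _; rewrite big_geq // mulr0.
  have := @dist_walk_le H (pv x p) 0 i0.
  rewrite !addn0 big_geq //; apply => j h1 h2; exfalso; lia.
move=> /andP[h01 hp] hseg.
have h1 := hseg (i0, i1) (mem_head _ _).
have h2 : (dist w H (pv x p i1) (pv x p (last i1 I)) <=
     (alpha * \sum_(i1 <= j < last i1 I) w (pv x p j) (pv x p j.+1))%:E)%E.
  apply: IH => // ab hab; apply: hseg; rewrite /segs /= in_cons.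
  by move: hab; rewrite /segs /= => ->; rewrite orbT.
rewrite (@big_cat_nat _ _ _ i1) /= ?mulrDr; last exact: path_last_ge.
  2: exact: ltnW.
exact: dist_tri h1 h2.
Qed.

End Aux.

Section Main.
Variables (R : realType) (V : finType) (E : {set V * V}) (w : V -> V -> R).
Hypothesis E_sym : forall u v, (u, v) \in E -> (v, u) \in E.
Hypothesis w_pos : forall u v, (u, v) \in E -> 0 < w u v.
Variables (alpha beta : R).
Hypothesis halpha : 1 <= alpha.
Hypothesis hbeta : 0 <= beta.

Lemma Wmax_ge0 : 0 <= Wmax w E.
Proof.
rewrite /Wmax; elim/big_ind: _ => //.
  by move=> a b ha hb; rewrite le_max ha.
by move=> [e1 e2] he; exact: ltW (w_pos he).
Qed.

Lemma step_new (H H' : {set V * V}) : H \subset E -> completion_step w E alpha beta H H' ->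
  [/\ H' \subset E, H \subset H' & exists2 e, e \in H' & e \notin H].
Proof.
move=> hHE [x [y [p [I [hlt [hpw hd] [[hsz hhd hlst hsort hsegc] _] ->]]]]].
rewrite in_setE in hpw; case: hpw => hpath hlast.
case: I hsz hhd hlst hsort hsegc => [//|i0 I'] hsz /= hhd hlst hsort hsegc.
have edge : forall j, (j < size p)%N -> (pv x p j, pv x p j.+1) \in E.
  by move=> j hj; move/(pathP x): hpath => h; exact: h j hj.
have hEa : Ealpha w H alpha x p (i0 :: I') \subset E.
  apply/fintype.subsetP => e; rewrite inE => /hasP [ab hab /and3P[/eqP hb /orP[/eqP->|/eqP->] _]];
  have [_ h2] := segs_prop hsort hab; rewrite hlst hb in h2.
    by rewrite hb; exact: edge.
  by rewrite hb; apply: E_sym; exact: edge.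
split; first by rewrite finset.subUset hHE hEa.
  exact: finset.subsetUl.
case: (boolP (Ealpha w H alpha x p (i0 :: I') \subset H)) => [hsub|]; last first.
  by move/fintype.subsetPn => [e he hne]; exists e => //; rewrite inE he orbT.
exfalso.
have hseg : forall ab, ab \in segs (i0 :: I') ->
   (dist w H (pv x p ab.1) (pv x p ab.2) <=
     (alpha * \sum_(ab.1 <= j < ab.2) w (pv x p j) (pv x p j.+1))%:E)%E.
  move=> [a b] hab /=; have [/= hab1 hb] := segs_prop hsort hab; rewrite hlst /= in hb.
  case: (leqP 2 (b - a)) => hl.
    apply: (le_trans (hsegc _ hab hl)) => /=; rewrite EFinM; apply: lee_wpmul2l.
      by rewrite lee_fin; exact: le_trans ler01 halpha.
    have := @dist_walk_le R V w E (pv x p) (b - a) a.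
    rewrite subnKC ?(ltnW hab1) //; apply => j h1 h2; apply: edge; lia.
  have hb1 : b = a.+1 by lia.
  subst b; rewrite big_nat1.
  have hWa : 0 <= w (pv x p a) (pv x p a.+1) by apply: ltW; apply: w_pos; apply: edge; lia.
  case: (boolP ((pv x p a, pv x p a.+1) \in H)) => hin.
    have := @dist_walk_le R V w H (pv x p) 1 a.
    rewrite addn1 big_nat1 => h; apply: le_trans (h _) _.
      by move=> j h1 h2; have -> : j = a by lia.
    rewrite lee_fin -subr_ge0 -[X in _ - X](mul1r) -mulrBl.
    by apply: mulr_ge0 => //; rewrite subr_ge0.
  rewrite leNgt; apply/negP => hgt.
  have : (pv x p a, pv x p a.+1) \in Ealpha w H alpha x p (i0 :: I').
    rewrite inE; apply/hasP; exists (a, a.+1) => //=.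
    by rewrite !eqxx hgt.
  by move/(fintype.subsetP hsub); rewrite (negbTE hin).
have := chain hsort hseg.
rewrite hlst hhd pv_last hlast -walk_w_pv.
rewrite -hd in hlt => hb.
have := lt_le_trans hlt hb; rewrite -EFinM -EFinD lte_fin.
have := Wmax_ge0; move=> hW.
have : 0 <= beta * Wmax w E by apply: mulr_ge0.
lra.
Qed.

Lemma acc_main n (H : {set V * V}) : (#|E :\: H| < n)%N -> H \subset E ->
  Acc (fun H' H => completion_step w E alpha beta H H') H.
Proof.
elim: n H => [//|n IH] H hn hHE; constructor => H' hstep.
have [hH'E hHH' [e he hne]] := step_new hHE hstep.
apply: IH; last exact: hH'E.
have hp : (E :\: H') \proper (E :\: H).
  apply/properP; split; first exact: finset.setDS.
exists e; first by rewrite inE hne (fintype.subsetP hH'E).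
  by rewrite inE he.
by apply: leq_trans (proper_card hp) _; rewrite -ltnS.
Qed.

End Main.

Theorem corollary3p2 (R : realType) (V : finType) (E : {set V * V})
    (w : V -> V -> R)
    (E_irr : forall u, (u, u) \notin E)
    (E_sym : forall u v, (u, v) \in E -> (v, u) \in E)
    (w_sym : forall u v, w u v = w v u)
    (w_pos : forall u v, (u, v) \in E -> 0 < w u v)
    (E_short : forall u v, (u, v) \in E -> dist w E u v = (w u v)%:E)
    (alpha beta : R) (halpha : 1 <= alpha) (hbeta : 0 <= beta)
    (H0 : {set V * V}) (H0_sub : H0 \subset E)
    (H0_sym : forall u v, (u, v) \in H0 -> (v, u) \in H0) :
  Acc (fun H' H => completion_step w E alpha beta H H') H0.
Proof.
exact: (acc_main E_sym w_pos halpha hbeta (n := #|E :\: H0|.+1)).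
Qed.
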